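(* (i) For each $k\in\mathbb{N}$ let $f_k=q_{A_k}(\cdot-a_k)+\langle b_k,\cdot\rangle+c_k$, where $A_k$ is a maximally monotone symmetric linear relation on $\mathbb{R}^n$, $a_k,b_k\in\mathbb{R}^n$, $c_k\in\mathbb{R}$. If $f_k$ epiconverges to $f$ and $f$ is proper, then $f=q_A(\cdot-a)+\langle b,\cdot\rangle+c$ for some maximally monotone symmetric linear relation $A$, $a,b\in\mathbb{R}^n$, $c\in\mathbb{R}$. (ii) For each $k$ let $f_k=q_{A_k}+c_k$ with $A_k$ a maximally monotone symmetric linear relation and $c_k\in\mathbb{R}$. If $f_k$ epiconverges to $f$ and $f$ is proper, then $f=q_A+c$ for some maximally monotone symmetric linear relation $A$ and $c\in\mathbb{R}$.
   Context: Linear relation: operator $\mathbb{R}^n\rightrightarrows\mathbb{R}^n$ with linear-subspace graph; monotone, maximally monotone and symmetric ($\langle x,y^*\rangle=\langle y,x^*\rangle$ on the graph) as usual. $q_A(x)=\frac12\langle x,Ax\rangle$ on $\operatorname{dom}A$, $\infty$ elsewhere. Epiconvergence means Painlevé–Kuratowski convergence of epigraphs. *)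

(* Defs.v *)
From HB Require Import structures.
From mathcomp Require Import all_boot all_order all_algebra.
From mathcomp Require Import all_classical all_reals all_analysis.
Set Implicit Arguments. Unset Strict Implicit. Unset Printing Implicit Defensive.
Import Order.TTheory GRing.Theory Num.Theory.
Import numFieldNormedType.Exports.
Local Open Scope classical_set_scope.
Local Open Scope ring_scope.

Section Defs.
Context {R : realType} {n : nat}.
Local Notation V := 'rV[R]_n.

Definition dotp (x y : V) : R := \sum_(i < n) x ord0 i * y ord0 i.

(* A linear relation R^n ⇉ R^n is given by its graph, a linear subspace of R^n × R^n *)
Definition linrel (A : set (V * V)) : Prop :=
  [/\ A (0, 0),
      (forall x x' y y', A (x, x') -> A (y, y') -> A (x + y, x' + y')) &
      (forall (r : R) x x', A (x, x') -> A (r *: x, r *: x')) ].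

Definition monotone_rel (A : set (V * V)) : Prop :=
  forall x x' y y', A (x, x') -> A (y, y') -> 0 <= dotp (x - y) (x' - y').

Definition max_monotone (A : set (V * V)) : Prop :=
  monotone_rel A /\
  forall B : set (V * V), monotone_rel B -> A `<=` B -> B = A.

Definition symmetric_rel (A : set (V * V)) : Prop :=
  forall x x' y y', A (x, x') -> A (y, y') -> dotp x y' = dotp y x'.

Definition mm_sym_linrel (A : set (V * V)) : Prop :=
  [/\ linrel A, max_monotone A & symmetric_rel A].

Definition qA (A : set (V * V)) (x : V) : \bar R :=
  if `[< exists y, A (x, y) >]
  then ((2^-1) * dotp x (xget 0 [set y | A (x, y)]))%:E
  else +oo%E.

Definition proper_fun (f : V -> \bar R) : Prop :=
  (forall x, (-oo < f x)%E) /\ (exists x, (f x < +oo)%E).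

Definition epigraph (f : V -> \bar R) : set (V * R) :=
  [set p | (f p.1 <= p.2%:E)%E].

End Defs.

Definition inner_limit {T : topologicalType} (C : nat -> set T) : set T :=
  [set x | exists u : nat -> T, u @ \oo --> x /\ \forall k \near \oo, C k (u k)].

Definition outer_limit {T : topologicalType} (C : nat -> set T) : set T :=
  [set x | exists (phi : nat -> nat) (u : nat -> T),
      (forall k, (phi k < phi k.+1)%N) /\ (forall k, C (phi k) (u k)) /\
      u @ \oo --> x].

Definition PK_converges {T : topologicalType} (C : nat -> set T) (D : set T) : Prop :=
  outer_limit C `<=` D /\ D `<=` inner_limit C.

Definition epiconverges {R : realType} {n : nat}
  (f : nat -> 'rV[R]_n -> \bar R) (g : 'rV[R]_n -> \bar R) : Prop :=
  PK_converges (fun k => epigraph (f k)) (epigraph g).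

Definition quadf {R : realType} {n : nat} (A : set ('rV[R]_n * 'rV[R]_n))
  (a b : 'rV[R]_n) (c : R) (x : 'rV[R]_n) : \bar R :=
  (qA A (x - a) + (dotp b x + c)%:E)%E.

(* Main.v *)
Require Import Defs.
From HB Require Import structures.
From mathcomp Require Import all_boot all_order all_algebra.
From mathcomp Require Import all_classical all_reals all_analysis.
From mathcomp Require Import ring lra.
Import Order.TTheory GRing.Theory Num.Theory.
Import numFieldNormedType.Exports.
Local Open Scope classical_set_scope.
Local Open Scope ring_scope.
Set Implicit Arguments. Unset Strict Implicit.
Local Open Scope classical_set_scope.

Ltac vec_eq := apply/rowP => ?; rewrite !mxE; ring.

Section PA.
Context {R : realType} {n : nat}.
Local Notation V := 'rV[R]_n.

Lemma dotpE (x y : V) : dotp x y = \sum_(i < n) x ord0 i * y ord0 i.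
Proof. by []. Qed.

Lemma dotpC (x y : V) : dotp x y = dotp y x.
Proof. by rewrite !dotpE; apply: eq_bigr => i _; rewrite mulrC. Qed.

Lemma dotpDl (x y z : V) : dotp (x + y) z = dotp x z + dotp y z.
Proof. by rewrite !dotpE -big_split; apply: eq_bigr => i _; rewrite !mxE mulrDl. Qed.

Lemma dotpZl (t : R) (x z : V) : dotp (t *: x) z = t * dotp x z.
Proof. by rewrite !dotpE mulr_sumr; apply: eq_bigr => i _; rewrite !mxE mulrA. Qed.

Lemma dotp0l (z : V) : dotp 0 z = 0.
Proof. by rewrite dotpE big1 // => i _; rewrite mxE mul0r. Qed.

Lemma dotpNl (x z : V) : dotp (- x) z = - dotp x z.
Proof. by rewrite -scaleN1r dotpZl mulN1r. Qed.

Lemma dotpBl (x y z : V) : dotp (x - y) z = dotp x z - dotp y z.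
Proof. by rewrite dotpDl dotpNl. Qed.

Lemma dotpNr (x z : V) : dotp z (- x) = - dotp z x.
Proof. by rewrite dotpC dotpNl dotpC. Qed.

Lemma dotpDr (x y z : V) : dotp z (x + y) = dotp z x + dotp z y.
Proof. by rewrite dotpC dotpDl !(dotpC z). Qed.
Lemma dotpZr (t : R) (x z : V) : dotp z (t *: x) = t * dotp z x.
Proof. by rewrite dotpC dotpZl dotpC. Qed.
Lemma dotp0r (z : V) : dotp z 0 = 0.
Proof. by rewrite dotpC dotp0l. Qed.
Lemma dotpBr (x y z : V) : dotp z (x - y) = dotp z x - dotp z y.
Proof. by rewrite dotpC dotpBl !(dotpC z). Qed.

Lemma test_vec (x y : V) (t : R) : x + t *: (y - x) = (1 - t) *: x + t *: y.
Proof. vec_eq. Qed.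


Definition GQ (h : V -> \bar R) : Prop :=
  (forall x, (-oo < h x)%E) /\
  (forall x y, (h x < +oo)%E -> (h y < +oo)%E ->
     exists a b c : R, 0 <= a /\
       forall t : R, h (x + t *: (y - x)) = (a * t ^+ 2 + b * t + c)%:E).

Lemma qA_val (A : set (V * V)) p P : symmetric_rel A -> A (p, P) ->
  qA A p = (2^-1 * dotp p P)%:E.
Proof.
move=> Hs HA; rewrite /qA.
have -> : `[< exists y, A (p, y) >] = true by apply/asboolP; exists P.
have Hy := xgetPex 0 (ex_intro (fun y => A (p, y)) P HA).
by rewrite (Hs p P p _ HA Hy).
Qed.

Lemma qA_out (A : set (V * V)) p : ~ (exists y, A (p, y)) -> qA A p = +oo%E.
Proof. by move=> H; rewrite /qA asboolF. Qed.

Lemma qA_ninfty (A : set (V * V)) p : (-oo < qA A p)%E.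
Proof. by rewrite /qA; case: ifP => _ //; rewrite ltNyr. Qed.

Lemma GQ_quadf (A : set (V * V)) a b c :
  linrel A -> monotone_rel A -> symmetric_rel A -> GQ (quadf A a b c).
Proof.
move=> [H0 HD HZ] Hm Hs; split.
  move=> x; rewrite /quadf; have := qA_ninfty A (x - a).
  case: (qA A (x - a)) => // r _; by rewrite -EFinD ltNyr.
have dom : forall x, (quadf A a b c x < +oo)%E -> exists X, A (x - a, X).
  move=> x; rewrite /quadf => Hx; apply: contrapT => Hn.
  by move: Hx; rewrite qA_out //= ltxx.
move=> x y /dom [X HX] /dom [Y HY].
have HYX : A (y - x, Y - X).
  have := HD _ _ _ _ HY (HZ (-1) _ _ HX).
  have -> : y - a + (-1) *: (x - a) = y - x by vec_eq.
  by have -> : Y + (-1) *: X = Y - X by vec_eq.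
have Hpos := Hm _ _ _ _ HYX H0.
rewrite !subr0 in Hpos.
exists (2^-1 * dotp (y - x) (Y - X)),
       (2^-1 * (dotp (x - a) (Y - X) + dotp (y - x) X) + dotp b (y - x)),
       (2^-1 * dotp (x - a) X + dotp b x + c).
split; first by apply: mulr_ge0 => //; rewrite invr_ge0.
move=> t; rewrite /quadf.
have HA : A ((x + t *: (y - x)) - a, X + t *: (Y - X)).
  have := HD _ _ _ _ HX (HZ t _ _ HYX).
  by have -> : x - a + t *: (y - x) = x + t *: (y - x) - a by vec_eq.
rewrite (qA_val Hs HA) -EFinD; congr (_%:E).
rewrite !dotpDl !dotpDr !dotpZl !dotpZr !dotpBl !dotpBr !dotpNl !dotpNr.
ring.
Qed.


Lemma cvg_fst_seq (u : nat -> V * R) (x : V) (r : R) :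
  u @ \oo --> (x, r) -> (fun k => (u k).1) @ \oo --> x.
Proof. move=> H. have := cvg_comp _ _ H (@cvg_fst _ _ (nbhs x) (nbhs r) _). move=> H2; exact: H2. Qed.
Lemma cvg_snd_seq (u : nat -> V * R) (x : V) (r : R) :
  u @ \oo --> (x, r) -> (fun k => (u k).2) @ \oo --> r.
Proof. move=> H. have := cvg_comp _ _ H (@cvg_snd _ _ (nbhs x) (nbhs r) _). move=> H2; exact: H2. Qed.
Lemma cvg_pair_seq (z : nat -> V) (s : nat -> R) (x : V) (r : R) :
  z @ \oo --> x -> s @ \oo --> r -> (fun k => (z k, s k)) @ \oo --> (x, r).
Proof. move=> H1 H2. have H3 := cvg_pair H1 H2. exact: H3. Qed.

Lemma incr_ge (phi : nat -> nat) : (forall k, (phi k < phi k.+1)%N) -> forall k, (k <= phi k)%N.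
Proof. move=> H; elim=> // k IH; exact: leq_ltn_trans IH (H k). Qed.

Lemma cvg_subseq_nat (phi : nat -> nat) (z : nat -> V) (x : V) :
  (forall k, (phi k < phi k.+1)%N) -> z @ \oo --> x -> (fun k => z (phi k)) @ \oo --> x.
Proof.
move=> Hphi Hz; apply: (cvg_comp phi z _ Hz).
move=> P [N _ HN]; exists N => // k /= Hk; apply: HN => /=.
apply: (leq_trans Hk); exact: incr_ge.
Qed.

Variables (fk : nat -> V -> \bar R) (f : V -> \bar R).
Hypothesis He : epiconverges fk f.

Lemma epi_upper (z : nat -> V) (s : nat -> R) (p : V) (r : R) :
  (\forall k \near \oo, (fk k (z k) <= (s k)%:E)%E) ->
  z @ \oo --> p -> s @ \oo --> r -> (f p <= r%:E)%E.
Proof.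
move=> [N _ HN] Hz Hs; case: He => Hout _.
have : outer_limit (fun k => epigraph (fk k)) (p, r).
  exists (fun k => (k + N)%N), (fun k => (z (k + N)%N, s (k + N)%N)); split.
    by move=> k; rewrite addSn.
  split; first by move=> k; rewrite /epigraph /=; apply: HN => /=; rewrite leq_addl.
  apply: cvg_pair_seq.
    by rewrite (cvg_shiftn N z).
  by rewrite (cvg_shiftn N s).
by move/Hout.
Qed.

Lemma epi_lower (z : nat -> V) (p : V) (r : R) :
  z @ \oo --> p -> (r%:E < f p)%E ->
  \forall k \near \oo, (r%:E < fk k (z k))%E.
Proof.
move=> Hz Hr.
case: (pselect (\forall k \near \oo, (r%:E < fk k (z k))%E)) => // Hn; exfalso.
have H' : forall N, exists k, (N <= k)%N /\ ~ (r%:E < fk k (z k))%E.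
  move=> N; apply: contrapT => Hno; apply: Hn; exists N => // k /= Hk.
  apply: contrapT => nP; apply: Hno; by exists k.
have [g Hg] := choice H'.
pose phi := fix phi k := if k is k'.+1 then g (phi k').+1 else g 0%N.
have Hphi : forall k, (phi k < phi k.+1)%N by move=> k /=; case: (Hg (phi k).+1).
have Hphi2 : forall k, ~ (r%:E < fk (phi k) (z (phi k)))%E by case=> [|k] /=; [case: (Hg 0%N) | case: (Hg (phi k).+1)].
case: He => Hout _.
have : outer_limit (fun k => epigraph (fk k)) (p, r).
  exists phi, (fun k => (z (phi k), r)); split => //; split.
    by move=> k; rewrite /epigraph /= leNgt; apply/negP; exact: Hphi2.
  apply: cvg_pair_seq; [exact: cvg_subseq_nat | exact: cvg_cst].
move/Hout; rewrite /epigraph /= => Hle.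
by move: (lt_le_trans Hr Hle); rewrite ltxx.
Qed.

Lemma epi_recover (x : V) (r : R) : (f x <= r%:E)%E ->
  exists (z : nat -> V) (s : nat -> R), z @ \oo --> x /\ s @ \oo --> r /\
     \forall k \near \oo, (fk k (z k) <= (s k)%:E)%E.
Proof.
move=> H; case: He => _ Hin.
have [u [Hu Hev]] := Hin (x, r) H.
exists (fun k => (u k).1), (fun k => (u k).2); split; first exact: cvg_fst_seq Hu.
split; first exact: cvg_snd_seq Hu.
exact: Hev.
Qed.


Lemma lag_id (a b c s t : R) : s != 0 -> s != 1 ->
  a * t ^+ 2 + b * t + c =
  (t - s) * (t - 1) / s * c + t * (t - 1) / (s * (s - 1)) * (a * s ^+ 2 + b * s + c)
  + t * (t - s) / (1 - s) * (a + b + c).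
Proof.
move=> Hs0 Hs1.
have H1 : s - 1 != 0 by rewrite subr_eq0.
have H2 : 1 - s != 0 by rewrite subr_eq0 eq_sym.
by field; rewrite ?Hs0 ?H1 ?H2.
Qed.

Lemma lag_ineq (a b c s t X Y M : R) : 0 < s < 1 -> 0 <= t * (t - 1) ->
  c <= X -> a + b + c <= Y -> M <= a * s ^+ 2 + b * s + c ->
  a * t ^+ 2 + b * t + c <=
  (t - s) * (t - 1) / s * X + t * (t - 1) / (s * (s - 1)) * M + t * (t - s) / (1 - s) * Y.
Proof.
move=> /andP[s0 s1] Ht HX HY HM.
rewrite (lag_id a b c t (lt0r_neq0 s0)); last by rewrite lt_eqF.
have Hts : 0 <= (t - s) * (t - 1) /\ 0 <= t * (t - s).
  case: (lerP t 0) => Ht0.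
    split; first by rewrite mulr_le0 // subr_le0 ?(le_trans Ht0) // ?ltW // (le_trans (ltW s0)) // ltW.
    by rewrite mulr_le0 // subr_le0 (le_trans Ht0) // ltW.
  have Ht1 : 1 <= t by move: Ht; rewrite pmulr_rge0 // subr_ge0.
  split; apply: mulr_ge0; rewrite ?subr_ge0 //; try exact: ltW.
  - exact: le_trans (ltW s1) Ht1.
  - exact: le_trans (ltW s1) Ht1.
case: Hts => HA HB.
apply: lerD; first apply: lerD.
- by apply: ler_wpM2l => //; apply: divr_ge0 => //; exact: ltW.
- apply: ler_wnM2l => //.
  apply: mulr_ge0_le0 => //.
  rewrite invr_le0; apply: mulr_ge0_le0; first exact: ltW.
  by rewrite subr_le0 ltW.
- by apply: ler_wpM2l => //; apply: divr_ge0 => //; rewrite subr_ge0 ltW.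
Qed.

Lemma GQ_line (h : V -> \bar R) x y : GQ h -> (h x < +oo)%E -> (h y < +oo)%E ->
  exists a b c : R, [/\ 0 <= a, (forall t, h (x + t *: (y - x)) = (a * t ^+ 2 + b * t + c)%:E),
    h x = c%:E & h y = (a + b + c)%:E].
Proof.
move=> [_ HG] Hx Hy; have [a [b [c [Ha Hl]]]] := HG x y Hx Hy.
exists a, b, c; split => //.
  by have := Hl 0; rewrite scale0r addr0 => ->; congr (_%:E); rewrite expr0n /=; ring.
by have := Hl 1; rewrite scale1r addrC subrK => ->; congr (_%:E); rewrite expr1n; ring.
Qed.

Hypothesis HG : forall k, GQ (fk k).

Lemma ev_and3 (P Q S : nat -> Prop) : (\forall k \near \oo, P k) -> (\forall k \near \oo, Q k) ->
  (\forall k \near \oo, S k) -> \forall k \near \oo, P k /\ Q k /\ S k.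
Proof.
move=> [N1 _ H1] [N2 _ H2] [N3 _ H3]; exists (maxn N1 (maxn N2 N3)) => // k /= Hk.
rewrite !geq_max in Hk; case/and3P: Hk => h1 h2 h3.
split; first exact: H1. split; first exact: H2. exact: H3.
Qed.

Lemma lim_convex x y (rx ry t : R) : f x = rx%:E -> f y = ry%:E -> 0 <= t <= 1 ->
  (f (x + t *: (y - x)) <= ((1 - t) * rx + t * ry)%:E)%E.
Proof.
move=> Ex Ey /andP[t0 t1].
have [zx [sx [Hzx [Hsx Hx]]]] := epi_recover (x := x) (r := rx) ltac:(by rewrite Ex).
have [zy [sy [Hzy [Hsy Hy]]]] := epi_recover (x := y) (r := ry) ltac:(by rewrite Ey).
apply: (@epi_upper (fun k => zx k + t *: (zy k - zx k))
                  (fun k => (1 - t) * sx k + t * sy k)).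
- have [N _ HN] := ev_and3 Hx Hy Hx.
  exists N => // k /= /HN [H1 [H2 _]].
  have [a [b [c [Ha Hl Ec Eabc]]]] := GQ_line (HG k) (le_lt_trans H1 (ltry _)) (le_lt_trans H2 (ltry _)).
  rewrite Hl lee_fin; rewrite Ec lee_fin in H1; rewrite Eabc lee_fin in H2.
  have E : a * t ^+ 2 + b * t + c = (1 - t) * c + t * (a + b + c) - a * (t * (1 - t)) by ring.
  rewrite E; apply: (le_trans (y := (1 - t) * c + t * (a + b + c))).
    by rewrite lerBlDr lerDl; apply: mulr_ge0 => //; apply: mulr_ge0 => //; rewrite subr_ge0.
  apply: lerD; first by apply: ler_wpM2l => //; rewrite subr_ge0.
  by apply: ler_wpM2l.
- apply: cvgD => //; apply: cvgZr; exact: cvgB.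
- by apply: cvgD => //; apply: cvgMr.
Qed.


Hypothesis Hp : proper_fun f.

Lemma lim_extra x y (rx ry rm s t : R) : f x = rx%:E -> f y = ry%:E ->
  f (x + s *: (y - x)) = rm%:E -> 0 < s < 1 -> 0 <= t * (t - 1) ->
  (f (x + t *: (y - x)) <= ((t - s) * (t - 1) / s * rx + t * (t - 1) / (s * (s - 1)) * rm
                            + t * (t - s) / (1 - s) * ry)%:E)%E.
Proof.
move=> Ex Ey Em /andP[s0 s1] Ht.
set L0 := (t - s) * (t - 1) / s; set Ls := t * (t - 1) / (s * (s - 1)); set L1 := t * (t - s) / (1 - s).
have Ls0 : Ls <= 0.
  apply: mulr_ge0_le0 => //; rewrite invr_le0; apply: mulr_ge0_le0; first exact: ltW.
  by rewrite subr_le0 ltW.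
apply/lee_addgt0Pr => e e0.
have dpos : 0 < 1 - Ls by rewrite subr_gt0 (le_lt_trans Ls0).
set d := e / (1 - Ls).
have d0 : 0 < d by apply: divr_gt0.
have [zx [sx [Hzx [Hsx Hx]]]] := epi_recover (x := x) (r := rx) ltac:(by rewrite Ex).
have [zy [sy [Hzy [Hsy Hy]]]] := epi_recover (x := y) (r := ry) ltac:(by rewrite Ey).
have Hm := epi_lower (z := fun k => zx k + s *: (zy k - zx k)) (p := x + s *: (y - x)) (r := rm - d)
   ltac:(apply: cvgD => //; apply: cvgZr; exact: cvgB)
   ltac:(by rewrite Em lte_fin ltrBlDr ltrDl).
apply: (le_trans (y := ((L0 * rx + Ls * (rm - d) + L1 * ry)%:E))).
  apply: (@epi_upper (fun k => zx k + t *: (zy k - zx k))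
                  (fun k => L0 * sx k + Ls * (rm - d) + L1 * sy k)).
  - have [N _ HN] := ev_and3 Hx Hy Hm.
    exists N => // k /= /HN [H1 [H2 H3]].
    have [a [b [c [Ha Hl Ec Eabc]]]] := GQ_line (HG k) (le_lt_trans H1 (ltry _)) (le_lt_trans H2 (ltry _)).
    rewrite Hl lee_fin; rewrite Ec lee_fin in H1; rewrite Eabc lee_fin in H2.
    rewrite Hl lte_fin in H3.
    by apply: lag_ineq => //; [rewrite s0 s1 | exact: ltW].
  - apply: cvgD => //; apply: cvgZr; exact: cvgB.
  - apply: cvgD; first apply: cvgD.
    + by apply: cvgMr.
    + exact: cvg_cst.
    + by apply: cvgMr.
rewrite -EFinD lee_fin.
have E : L0 * rx + Ls * (rm - d) + L1 * ry = L0 * rx + Ls * rm + L1 * ry + (- Ls * d) by ring.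
rewrite E lerD2l /d. rewrite mulrCA -[X in _ <= X]mulr1; apply: ler_wpM2l; first exact: ltW.
rewrite ler_pdivrMr // mul1r; lra.
Qed.


Definition lag3 (u1 u2 u3 v1 v2 v3 t : R) :=
  v1 * ((t - u2) * (t - u3) / ((u1 - u2) * (u1 - u3))) +
  v2 * ((t - u1) * (t - u3) / ((u2 - u1) * (u2 - u3))) +
  v3 * ((t - u1) * (t - u2) / ((u3 - u1) * (u3 - u2))).

Definition D4 (p1 p2 p3 p4 v1 v2 v3 v4 : R) :=
  v1 / ((p1 - p2) * (p1 - p3) * (p1 - p4)) + v2 / ((p2 - p1) * (p2 - p3) * (p2 - p4)) +
  v3 / ((p3 - p1) * (p3 - p2) * (p3 - p4)) + v4 / ((p4 - p1) * (p4 - p2) * (p4 - p3)).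

Lemma neq_sub (a b : R) : a < b -> (a - b != 0) && (b - a != 0).
Proof. by move=> h; rewrite !subr_eq0 lt_eqF // gt_eqF. Qed.

Lemma D4_sorted p1 p2 p3 p4 v1 v2 v3 v4 : p1 < p2 -> p2 < p3 -> p3 < p4 ->
  v4 <= lag3 p1 p2 p3 v1 v2 v3 p4 -> v1 <= lag3 p2 p3 p4 v2 v3 v4 p1 ->
  D4 p1 p2 p3 p4 v1 v2 v3 v4 = 0.
Proof.
move=> h12 h23 h34 H1 H2.
have h13 := lt_trans h12 h23; have h24 := lt_trans h23 h34; have h14 := lt_trans h13 h34.
have /andP[a1 a2] := neq_sub h12; have /andP[b1 b2] := neq_sub h13.
have /andP[c1 c2] := neq_sub h14; have /andP[d1 d2] := neq_sub h23.
have /andP[e1 e2] := neq_sub h24; have /andP[g1 g2] := neq_sub h34.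
have id1 : v4 - lag3 p1 p2 p3 v1 v2 v3 p4 =
   D4 p1 p2 p3 p4 v1 v2 v3 v4 * ((p4 - p1) * (p4 - p2) * (p4 - p3)).
  by rewrite /lag3 /D4; field; rewrite ?a1 ?a2 ?b1 ?b2 ?c1 ?c2 ?d1 ?d2 ?e1 ?e2 ?g1 ?g2.
have id2 : v1 - lag3 p2 p3 p4 v2 v3 v4 p1 =
   D4 p1 p2 p3 p4 v1 v2 v3 v4 * ((p1 - p2) * (p1 - p3) * (p1 - p4)).
  by rewrite /lag3 /D4; field; rewrite ?a1 ?a2 ?b1 ?b2 ?c1 ?c2 ?d1 ?d2 ?e1 ?e2 ?g1 ?g2.
have P0 : 0 < (p4 - p1) * (p4 - p2) * (p4 - p3) by rewrite !mulr_gt0 // subr_gt0.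
have Q0 : (p1 - p2) * (p1 - p3) * (p1 - p4) < 0.
  have u1 : 0 < (p1 - p2) * (p1 - p3) by nra.
  nra.
have k1 : D4 p1 p2 p3 p4 v1 v2 v3 v4 * ((p4 - p1) * (p4 - p2) * (p4 - p3)) <= 0 by rewrite -id1 subr_le0.
have k2 : D4 p1 p2 p3 p4 v1 v2 v3 v4 * ((p1 - p2) * (p1 - p3) * (p1 - p4)) <= 0 by rewrite -id2 subr_le0.
move: k1 k2 P0 Q0; set D := D4 _ _ _ _ _ _ _ _; set P := _ * _ * (p4 - p3); set Q := _ * _ * (p1 - p4).
move=> k1 k2 P0 Q0; nra.
Qed.


Section Solve.
Variables (a b c : R).
Let Q t := a * t ^+ 2 + b * t + c.
Variables (p1 p2 p3 p4 : R).
Hypotheses (n12 : p1 - p2 != 0) (n13 : p1 - p3 != 0) (n14 : p1 - p4 != 0)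
  (n23 : p2 - p3 != 0) (n24 : p2 - p4 != 0) (n34 : p3 - p4 != 0).

Let n21 : p2 - p1 != 0. Proof. by rewrite -opprB oppr_eq0. Qed.
Let n31 : p3 - p1 != 0. Proof. by rewrite -opprB oppr_eq0. Qed.
Let n41 : p4 - p1 != 0. Proof. by rewrite -opprB oppr_eq0. Qed.
Let n32 : p3 - p2 != 0. Proof. by rewrite -opprB oppr_eq0. Qed.
Let n42 : p4 - p2 != 0. Proof. by rewrite -opprB oppr_eq0. Qed.
Let n43 : p4 - p3 != 0. Proof. by rewrite -opprB oppr_eq0. Qed.

Let D4Q : D4 p1 p2 p3 p4 (Q p1) (Q p2) (Q p3) (Q p4) = 0.
Proof.
rewrite /D4 /Q; field.
by rewrite ?n12 ?n13 ?n14 ?n23 ?n24 ?n34 ?n21 ?n31 ?n41 ?n32 ?n42 ?n43.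
Qed.

Let inv_eq (v w d : R) : d != 0 -> v / d = w / d -> v = w.
Proof. by move=> hd /(mulIf (invr_neq0 hd)). Qed.

Lemma D4_slot4 v : D4 p1 p2 p3 p4 (Q p1) (Q p2) (Q p3) v = 0 -> v = Q p4.
Proof.
move=> H; have := D4Q; rewrite -H /D4 => /addrI /esym.
apply: inv_eq; by rewrite !mulf_neq0.
Qed.

Lemma D4_slot1 v : D4 p1 p2 p3 p4 v (Q p2) (Q p3) (Q p4) = 0 -> v = Q p1.
Proof.
move=> H; have := D4Q; rewrite -H /D4 -!addrA => /addIr /esym.
apply: inv_eq; by rewrite !mulf_neq0.
Qed.

Lemma D4_slot3 v : D4 p1 p2 p3 p4 (Q p1) (Q p2) v (Q p4) = 0 -> v = Q p3.
Proof.
move=> H; have := D4Q; rewrite -H /D4 => /addIr /addrI /esym.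
apply: inv_eq; by rewrite !mulf_neq0.
Qed.
End Solve.


Lemma ereal_real (u : \bar R) : (-oo < u)%E -> (u < +oo)%E -> exists r : R, u = r%:E.
Proof. by case: u => // r _ _; exists r. Qed.

Lemma lim_GQ : GQ f.
Proof.
split; first by case: Hp.
move=> x y Hx Hy.
have [rx Ex] := ereal_real (Hp.1 x) Hx.
have [ry Ey] := ereal_real (Hp.1 y) Hy.
have Hconv : forall t, 0 <= t <= 1 -> exists r, f (x + t *: (y - x)) = r%:E.
  move=> t Ht; apply: ereal_real; first exact: Hp.1.
  exact: le_lt_trans (lim_convex Ex Ey Ht) (ltry _).
have [rm Em] := Hconv (2^-1) ltac:(by rewrite invr_ge0 ler0n /= invf_le1 // ler1n).
have real_all : forall t, exists r, f (x + t *: (y - x)) = r%:E.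
  move=> t; case: (boolP (0 <= t * (t - 1))) => Ht.
    apply: ereal_real; first exact: Hp.1.
    apply: le_lt_trans (lim_extra Ex Ey Em _ Ht) (ltry _).
    by rewrite invr_gt0 ltr0n /= invf_lt1 // ltr1n.
  rewrite -ltNge in Ht; apply: Hconv; apply/andP; split; nra.
pose psi t := fine (f (x + t *: (y - x))).
have Epsi : forall t, f (x + t *: (y - x)) = (psi t)%:E.
  by move=> t; rewrite /psi; have [r ->] := real_all t.
have B3 : forall u1 u2 u3 tau, u1 < u2 -> u2 < u3 -> 0 <= (tau - u1) * (tau - u3) ->
    psi tau <= lag3 u1 u2 u3 (psi u1) (psi u2) (psi u3) tau.
  move=> u1 u2 u3 tau h12 h23 ht.
  have h13 := lt_trans h12 h23.
  have w0 : 0 < u3 - u1 by rewrite subr_gt0.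
  have wn : u3 - u1 != 0 by rewrite gt_eqF.
  have /andP[a1 a2] := neq_sub h12; have /andP[b1 b2] := neq_sub h13.
  have /andP[d1 d2] := neq_sub h23.
  set x' := x + u1 *: (y - x); set y' := x + u3 *: (y - x).
  have E1 : forall r, x' + r *: (y' - x') = x + (u1 + r * (u3 - u1)) *: (y - x).
    by move=> r; rewrite /x' /y'; vec_eq.
  have Ex' : f x' = (psi u1)%:E by rewrite Epsi.
  have Ey' : f y' = (psi u3)%:E by rewrite Epsi.
  set s := (u2 - u1) / (u3 - u1).
  have Em' : f (x' + s *: (y' - x')) = (psi u2)%:E.
    by rewrite E1 (_ : u1 + s * (u3 - u1) = u2) ?Epsi // /s; field.
  have Hs : 0 < s < 1.
    apply/andP; split; first by apply: divr_gt0 => //; rewrite subr_gt0.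
    by rewrite ltr_pdivrMr // mul1r ltrD2r.
  set t' := (tau - u1) / (u3 - u1).
  have Ht' : 0 <= t' * (t' - 1).
    have -> : t' * (t' - 1) = (tau - u1) * (tau - u3) / ((u3 - u1) * (u3 - u1)) by rewrite /t'; field.
    by apply: divr_ge0 => //; apply: mulr_ge0; exact: ltW.
  have := lim_extra Ex' Ey' Em' Hs Ht'.
  rewrite E1 (_ : u1 + t' * (u3 - u1) = tau) ?Epsi ?lee_fin; last by rewrite /t'; field.
  move/le_trans; apply; rewrite le_eqVlt; apply/orP; left; apply/eqP.
  have sn0 : s != 0 by rewrite gt_eqF //; case/andP: Hs.
  rewrite /lag3 /t' /s; field.
  by rewrite ?a1 ?a2 ?b1 ?b2 ?d1 ?d2 ?wn.
pose a := 2 * psi 0 - 4 * psi (2^-1) + 2 * psi 1.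
pose b := - 3 * psi 0 + 4 * psi (2^-1) - psi 1.
pose c := psi 0.
pose Q t := a * t ^+ 2 + b * t + c.
have Q0 : psi 0 = Q 0 by rewrite /Q /c; ring.
have Qh : psi (2^-1) = Q (2^-1) by rewrite /Q /a /b /c; field.
have Q1 : psi 1 = Q 1 by rewrite /Q /a /b /c; ring.
have apos : 0 <= a.
  have := lim_convex (Epsi 0) (Epsi 1) (t := 2^-1) ltac:(by rewrite invr_ge0 ler0n /= invf_le1 // ler1n).
  rewrite (_ : x + 0 *: (y - x) + 2^-1 *: (x + 1 *: (y - x) - (x + 0 *: (y - x))) = x + 2^-1 *: (y - x)); last by vec_eq.
  rewrite Epsi lee_fin /a => H; lra.
have h0 : (0 : R) < 2^-1 by rewrite invr_gt0.
have h1 : (2^-1 : R) < 1 by rewrite invf_lt1 // ltr1n.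
have Hgt1 : forall t, 1 < t -> psi t = Q t.
  move=> t ht.
  have h01 : (0 : R) < 1 by [].
  have D := D4_sorted h0 h1 ht (B3 0 (2^-1) 1 t h0 h1 ltac:(nra))
       (B3 (2^-1) 1 t 0 h1 ht ltac:(nra)).
  rewrite Q0 Qh Q1 in D.
  apply: (D4_slot4 _ _ _ _ _ _ D); rewrite subr_eq0 ?lt_eqF ?gt_eqF //; lra.
have Hlt0 : forall t, t < 0 -> psi t = Q t.
  move=> t ht.
  have D := D4_sorted ht h0 h1 (B3 t 0 (2^-1) 1 ht h0 ltac:(nra))
       (B3 0 (2^-1) 1 t h0 h1 ltac:(nra)).
  rewrite Q0 Qh Q1 in D.
  apply: (D4_slot1 _ _ _ _ _ _ D); rewrite subr_eq0 ?lt_eqF ?gt_eqF //; lra.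
have Hin : forall t, 0 < t < 1 -> psi t = Q t.
  move=> t /andP[ht0 ht1].
  have hm : (-1 : R) < 0 by rewrite oppr_lt0.
  have D := D4_sorted hm ht0 ht1 (B3 (-1) 0 t 1 hm ht0 ltac:(nra))
       (B3 0 t 1 (-1) ht0 ht1 ltac:(nra)).
  rewrite Q0 Q1 (Hlt0 _ hm) in D.
  apply: (D4_slot3 _ _ _ _ _ _ D); rewrite subr_eq0 ?lt_eqF ?gt_eqF //; lra.
exists a, b, c; split => // t; rewrite Epsi; congr (_%:E).
case: (ltrgtP t 0) => [/Hlt0 //|ht0|->]; last by rewrite Q0.
case: (ltrgtP t 1) => [ht1|/Hgt1 //|->]; last by rewrite Q1.
by apply: Hin; rewrite ht0 ht1.
Qed.

End PA.

Section LinAlg.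
Context {R : realType} {n : nat}.
Local Notation V := 'rV[R]_n.
Variable L : set V.
Hypotheses (L0 : L 0) (LD : forall u v, L u -> L v -> L (u + v))
  (LZ : forall (t : R) v, L v -> L (t *: v)).

Lemma L_sum (I : finType) (F : I -> V) : (forall i, L (F i)) -> L (\sum_i F i).
Proof. by move=> H; apply: big_ind => // i _; exact: H. Qed.

Lemma L_mul k (c : 'rV[R]_k) (M : 'M[R]_(k, n)) : (forall i, L (row i M)) -> L (c *m M).
Proof. by move=> H; rewrite mulmx_sum_row; apply: L_sum => i; apply: LZ. Qed.

Definition Pk (k : nat) := exists M : 'M[R]_(k, n), row_free M /\ forall i, L (row i M).

Lemma exists_basis : exists k (M : 'M[R]_(k, n)), forall v, L v <-> (v <= M)%MS.
Proof.
have ex0 : exists k, `[< Pk k >].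
  exists 0%N; apply/asboolP; exists 0; split; last by case.
  by rewrite /row_free mxrank0.
have ub : forall k, `[< Pk k >] -> (k <= n)%N.
  move=> k /asboolP [M [HM _]]; rewrite -(eqP HM); exact: rank_leq_col.
case: (ex_maxnP ex0 ub) => k /asboolP [M [Mfree ML]] kmax.
exists k, M => v; split; last first.
  by move=> /mulmxKpV <-; apply: L_mul.
move=> Lv; apply: contrapT => /negP nv.
have : (k.+1 <= k)%N.
  apply: kmax; apply/asboolP; exists (col_mx v M); split.
    rewrite -row_leq_rank -(addsmxE v M).1.
    have : (M < v + M)%MS by rewrite ltmxE addsmxSr /= addsmx_sub negb_and nv.
    rewrite ltmxErank => /andP[_]; move/eqP: Mfree => ->.
    by [].
  move=> i; case: (split_ordP (i : 'I_(1 + k))) => j ->.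
    have E := rowKu j v M; rewrite [row _ _]E (ord1 j) row_id //.
  have E := rowKd j v M; rewrite [row _ _]E //.
by rewrite ltnn.
Qed.


Lemma dotp_mx (x y : V) : dotp x y = (x *m y^T) 0 0.
Proof. by rewrite dotpE mxE; apply: eq_bigr => i _; rewrite mxE. Qed.

Lemma perp_perp u : (forall z, (forall w, L w -> dotp z w = 0) -> dotp u z = 0) -> L u.
Proof.
move=> Hu; have [k [M HM]] := exists_basis.
set K := kermx M^T.
have KM : K *m M^T = 0 by exact: mulmx_ker.
have Kperp : forall i w, L w -> dotp (row i K) w = 0.
  move=> i w /HM /mulmxKpV <-.
  rewrite dotp_mx trmx_mul mulmxA -row_mul KM row0 mul0mx mxE //.
have Hu0 : u *m K^T = 0.
  apply/rowP => j; rewrite [RHS]mxE -(Hu (row j K)); last by move=> w; exact: Kperp.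
  by rewrite dotpE mxE; apply: eq_bigr => l _; rewrite !mxE.
have uK : (u <= kermx K^T)%MS by rewrite sub_kermx Hu0.
have MK : (M <= kermx K^T)%MS.
  by rewrite sub_kermx -[M]trmxK -trmx_mul KM trmx0.
have rk : \rank M = \rank (kermx K^T).
  rewrite mxrank_ker mxrank_tr mxrank_ker mxrank_tr subKn //.
  exact: rank_leq_col.
have := (mxrank_leqif_eq MK).2; rewrite rk eqxx => /esym /andP[_ KM'].
by apply/HM; exact: submx_trans uK KM'.
Qed.

Lemma repr_lin (phi : V -> R) :
  (forall u v, L u -> L v -> phi (u + v) = phi u + phi v) ->
  (forall t v, L v -> phi (t *: v) = t * phi v) ->
  exists r : V, forall w, L w -> dotp r w = phi w.
Proof.
move=> phiD phiZ; have [k [M HM]] := exists_basis.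
pose pi (w : V) := w *m (pinvmx M *m M).
have piL : forall w, L (pi w) by move=> w; apply/HM; rewrite /pi mulmxA submxMl.
have piid : forall w, L w -> pi w = w by move=> w /HM Hw; rewrite /pi mulmxA mulmxKpV.
have phi0 : phi 0 = 0 by rewrite -(scale0r 0) phiZ // mul0r.
exists (\row_j phi (pi 'e_j)) => w Lw.
rewrite -{2}(piid w Lw) {2}(row_sum_delta w) /pi mulmx_suml.
have : L (\sum_(j < n) w 0 j *: 'e_j *m (pinvmx M *m M)) /\
       phi (\sum_(j < n) w 0 j *: 'e_j *m (pinvmx M *m M)) = \sum_(j < n) w 0 j * phi (pi 'e_j).
  apply: (big_rec2 (fun x y => L x /\ phi x = y)) => [|j x y _ [Lx <-]].
    by split.
  rewrite -scalemxAl; split; first by apply: LD => //; apply: LZ; exact: piL.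
  by rewrite phiD ?phiZ //; try apply: LZ; exact: piL.
move=> [_ ->]; rewrite dotpE; apply: eq_bigr => j _; rewrite mxE mulrC.
by [].
Qed.

End LinAlg.

Section Core.
Context {R : realType} {n : nat}.
Local Notation V := 'rV[R]_n.
Variables (f : V -> \bar R) (a : V).
Hypotheses (Hp : proper_fun f) (HGf : GQ f) (Ha : (f a < +oo)%E).

Definition Ls := [set v : V | (f (a + v) < +oo)%E].
Definition g (v : V) : R := fine (f (a + v)).

Lemma Eg v : Ls v -> f (a + v) = (g v)%:E.
Proof. by move=> H; rewrite /g; have [r ->] := ereal_real (Hp.1 (a + v)) H. Qed.

Lemma Lline u v t : Ls u -> Ls v -> Ls (u + t *: (v - u)).
Proof.
move=> Hu Hv; have [al [be [ga [_ Hl _ _]]]] := GQ_line HGf Hu Hv.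
rewrite /Ls /=; have -> : a + (u + t *: (v - u)) = a + u + t *: (a + v - (a + u)) by vec_eq.
by rewrite Hl ltry.
Qed.

Lemma Ls0 : Ls 0.
Proof. by rewrite /Ls /= addr0. Qed.

Lemma LsZ t v : Ls v -> Ls (t *: v).
Proof. by move=> Hv; have := Lline t Ls0 Hv; rewrite add0r subr0. Qed.

Lemma LsD u v : Ls u -> Ls v -> Ls (u + v).
Proof.
move=> Hu Hv; have := LsZ 2 (Lline (2^-1) Hu Hv).
have -> // : 2 *: (u + 2^-1 *: (v - u)) = u + v.
by apply/rowP => i; rewrite !mxE; field.
Qed.

Lemma LsN v : Ls v -> Ls (- v).
Proof. by move=> Hv; rewrite -scaleN1r; apply: LsZ. Qed.

Lemma LsB u v : Ls u -> Ls v -> Ls (u - v).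
Proof. by move=> Hu Hv; apply: LsD => //; apply: LsN. Qed.

Lemma Qline w v t : Ls w -> Ls v ->
  g (w + t *: v) = g w + t * ((g (w + v) - g (w - v)) / 2)
                   + (t * t) * ((g (w + v) + g (w - v) - 2 * g w) / 2)
  /\ 0 <= g (w + v) + g (w - v) - 2 * g w.
Proof.
move=> Hw Hv; have Hwv := LsD Hw Hv.
have [al [be [ga [Hal Hl _ _]]]] := GQ_line HGf Hw Hwv.
have gl : forall s, g (w + s *: v) = al * s ^+ 2 + be * s + ga.
  move=> s; rewrite /g.
  have -> : a + (w + s *: v) = a + w + s *: (a + (w + v) - (a + w)) by vec_eq.
  by rewrite Hl.
have g0 := gl 0; rewrite scale0r addr0 in g0.
have g1 := gl 1; rewrite scale1r in g1.
have gm := gl (-1); rewrite scaleN1r in gm.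
rewrite gl g0 g1 gm; split; last by rewrite expr0n /= in g0 *; rewrite !expr1n sqrrN expr1n; nra.
rewrite sqrrN !expr1n expr0n /=; by field.
Qed.

Definition q (v : V) := (g v + g (- v)) / 2 - g 0.
Definition l (v : V) := (g v - g (- v)) / 2.
Definition B (u v : V) := (q (u + v) - q (u - v)) / 4.

Section Plane.
Variables (u v : V).
Hypotheses (Hu : Ls u) (Hv : Ls v).
Let G s t := g (s *: u + t *: v).

Let LG s t : Ls (s *: u + t *: v).
Proof. by apply: LsD; apply: LsZ. Qed.

Lemma QG s0 t0 ds dt r s1 t1 sp tp sm tm :
  s1 = s0 + r * ds -> t1 = t0 + r * dt -> sp = s0 + ds -> tp = t0 + dt ->
  sm = s0 - ds -> tm = t0 - dt ->
  G s1 t1 = G s0 t0 + r * ((G sp tp - G sm tm) / 2) + (r * r) * ((G sp tp + G sm tm - 2 * G s0 t0) / 2).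
Proof.
move=> -> -> -> -> -> ->.
have [H _] := Qline r (LG s0 t0) (LG ds dt).
rewrite /G.
have -> : (s0 + r * ds) *: u + (t0 + r * dt) *: v = s0 *: u + t0 *: v + r *: (ds *: u + dt *: v) by vec_eq.
have -> : (s0 + ds) *: u + (t0 + dt) *: v = s0 *: u + t0 *: v + (ds *: u + dt *: v) by vec_eq.
have -> : (s0 - ds) *: u + (t0 - dt) *: v = s0 *: u + t0 *: v - (ds *: u + dt *: v) by vec_eq.
exact: H.
Qed.

Lemma qG s t : q (s *: u + t *: v) = (G s t + G (- s) (- t)) / 2 - G 0 0.
Proof.
rewrite /q /G; congr (_ / 2 - _); first congr (_ + _).
- by congr g; vec_eq.
- by congr g; vec_eq.
Qed.

Lemma lG s t : l (s *: u + t *: v) = (G s t - G (- s) (- t)) / 2.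
Proof.
rewrite /l /G; congr (_ / 2); congr (_ - _).
by congr g; vec_eq.
Qed.

Tactic Notation "qg" uconstr(s0) uconstr(t0) uconstr(ds) uconstr(dt) uconstr(r) uconstr(s1) uconstr(t1) uconstr(sp) uconstr(tp) uconstr(sm) uconstr(tm) :=
  have := @QG s0 t0 ds dt r s1 t1 sp tp sm tm ltac:(ring) ltac:(ring) ltac:(ring) ltac:(ring) ltac:(ring) ltac:(ring).

Lemma grid : q (u + v) + q (u - v) = 2 * q u + 2 * q v /\ l (u + v) = l u + l v.
Proof.
have h1 : q (u + v) = (G 1 1 + G (-1) (-1)) / 2 - G 0 0.
  by rewrite [u + v](_ : _ = 1 *: u + 1 *: v) ?qG //; vec_eq.
have h2 : q (u - v) = (G 1 (-1) + G (-1) 1) / 2 - G 0 0.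
  by rewrite [u - v](_ : _ = 1 *: u + (-1) *: v) ?qG ?opprK //; vec_eq.
have h3 : q u = (G 1 0 + G (-1) 0) / 2 - G 0 0.
  by rewrite [u](_ : _ = 1 *: u + 0 *: v) ?qG ?oppr0 //; vec_eq.
have h4 : q v = (G 0 1 + G 0 (-1)) / 2 - G 0 0.
  by rewrite [v](_ : _ = 0 *: u + 1 *: v) ?qG ?oppr0 //; vec_eq.
have h5 : l (u + v) = (G 1 1 - G (-1) (-1)) / 2.
  by rewrite [u + v](_ : _ = 1 *: u + 1 *: v) ?lG //; vec_eq.
have h6 : l u = (G 1 0 - G (-1) 0) / 2.
  by rewrite [u](_ : _ = 1 *: u + 0 *: v) ?lG ?oppr0 //; vec_eq.
have h7 : l v = (G 0 1 - G 0 (-1)) / 2.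
  by rewrite [v](_ : _ = 0 *: u + 1 *: v) ?lG ?oppr0 //; vec_eq.
rewrite h1 h2 h3 h4 h5 h6 h7.
qg 0 0 1 1 2 2 2 1 1 (-1) (-1).
qg 0 0 1 1 (-2) (-2) (-2) 1 1 (-1) (-1).
qg 0 0 1 (-1) 2 2 (-2) 1 (-1) (-1) 1.
qg 0 0 1 (-1) (-2) (-2) 2 1 (-1) (-1) 1.
qg 2 0 0 1 2 2 2 2 1 2 (-1).
qg 2 0 0 1 (-2) 2 (-2) 2 1 2 (-1).
qg (-2) 0 0 1 2 (-2) 2 (-2) 1 (-2) (-1).
qg (-2) 0 0 1 (-2) (-2) (-2) (-2) 1 (-2) (-1).
qg 0 0 1 0 2 2 0 1 0 (-1) 0.
qg 0 1 1 0 2 2 1 1 1 (-1) 1.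
qg 0 (-1) 1 0 2 2 (-1) 1 (-1) (-1) (-1).
qg 0 0 1 0 (-2) (-2) 0 1 0 (-1) 0.
qg 0 1 1 0 (-2) (-2) 1 1 1 (-1) 1.
qg 0 (-1) 1 0 (-2) (-2) (-1) 1 (-1) (-1) (-1).
move=> *; split; lra.
Qed.

Lemma hom s : B (s *: u) v = s * B u v.
Proof.
rewrite /B.
have h1 : q (s *: u + v) = (G s 1 + G (- s) (-1)) / 2 - G 0 0.
  by rewrite [s *: u + v](_ : _ = s *: u + 1 *: v) ?qG //; vec_eq.
have h2 : q (s *: u - v) = (G s (-1) + G (- s) 1) / 2 - G 0 0.
  by rewrite [s *: u - v](_ : _ = s *: u + (-1) *: v) ?qG ?opprK //; vec_eq.
have h3 : q (u + v) = (G 1 1 + G (-1) (-1)) / 2 - G 0 0.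
  by rewrite [u + v](_ : _ = 1 *: u + 1 *: v) ?qG //; vec_eq.
have h4 : q (u - v) = (G 1 (-1) + G (-1) 1) / 2 - G 0 0.
  by rewrite [u - v](_ : _ = 1 *: u + (-1) *: v) ?qG ?opprK //; vec_eq.
rewrite h1 h2 h3 h4.
qg 0 1 1 0 s s 1 1 1 (-1) 1 => ->.
qg 0 1 1 0 (- s) (- s) 1 1 1 (-1) 1 => ->.
qg 0 (-1) 1 0 s s (-1) 1 (-1) (-1) (-1) => ->.
qg 0 (-1) 1 0 (- s) (- s) (-1) 1 (-1) (-1) (-1) => ->.
by field.
Qed.

End Plane.

Ltac vec_field := apply/rowP => ?; rewrite !mxE; field.

Lemma Par u v : Ls u -> Ls v -> q (u + v) + q (u - v) = 2 * q u + 2 * q v.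
Proof. by move=> Hu Hv; case: (grid Hu Hv). Qed.

Lemma lD u v : Ls u -> Ls v -> l (u + v) = l u + l v.
Proof. by move=> Hu Hv; case: (grid Hu Hv). Qed.

Lemma BZ s u v : Ls u -> Ls v -> B (s *: u) v = s * B u v.
Proof. by move=> Hu Hv; exact: hom. Qed.

Lemma qN v : q (- v) = q v.
Proof. by rewrite /q opprK; congr (_ / 2 - _); exact: addrC. Qed.

Lemma q0 : q 0 = 0.
Proof. by rewrite /q oppr0; field. Qed.

Lemma Bsym u v : B u v = B v u.
Proof. by rewrite /B [v + u]addrC -[v - u]opprB qN. Qed.

Lemma Bvv v : Ls v -> B v v = q v.
Proof.
move=> Hv; have H := Par Hv Hv; rewrite subrr q0 addr0 in H.
by rewrite /B subrr q0 H; field.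
Qed.

Lemma qpos v : Ls v -> 0 <= q v.
Proof.
move=> Hv; have [_ H] := Qline 0 Ls0 Hv.
rewrite add0r sub0r in H; rewrite /q; lra.
Qed.

Lemma lZ t v : Ls v -> l (t *: v) = t * l v.
Proof.
move=> Hv; have [H1 _] := Qline t Ls0 Hv; have [H2 _] := Qline (- t) Ls0 Hv.
rewrite !add0r ?sub0r in H1 H2.
by rewrite /l -scaleNr H1 H2; field.
Qed.

Lemma BD x y z : Ls x -> Ls y -> Ls z -> B (x + y) z = B x z + B y z.
Proof.
move=> Hx Hy Hz.
set c := 2^-1 *: (x + y); set d := 2^-1 *: (x - y).
have Hc : Ls c by apply: LsZ; apply: LsD.
have Hd : Ls d by apply: LsZ; apply: LsB.
have P1 := Par (LsD Hc Hz) Hd; have P2 := Par (LsB Hc Hz) Hd.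
have e1 : c + z + d = x + z by rewrite /c /d; vec_field.
have e2 : c + z - d = y + z by rewrite /c /d; vec_field.
have e3 : c - z + d = x - z by rewrite /c /d; vec_field.
have e4 : c - z - d = y - z by rewrite /c /d; vec_field.
rewrite e1 e2 in P1; rewrite e3 e4 in P2.
have e5 : x + y = 2 *: c by rewrite /c; vec_field.
rewrite e5 BZ // /B; lra.
Qed.

Lemma BDr x y z : Ls x -> Ls y -> Ls z -> B z (x + y) = B z x + B z y.
Proof. by move=> *; rewrite !(Bsym z) BD. Qed.

Lemma BZr s u v : Ls u -> Ls v -> B v (s *: u) = s * B v u.
Proof. by move=> *; rewrite !(Bsym v) BZ. Qed.

Lemma lin_zero (al be : R) : (forall t, 0 <= al - t * be) -> be = 0.
Proof.
move=> H; apply: contrapT => /eqP hb.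
have := H ((al + 1) / be); rewrite divfK //; lra.
Qed.


Lemma quad_zero (al be : R) : (forall t, 0 <= - t * al + t * t * be) -> al = 0.
Proof.
move=> H; apply: contrapT => /eqP ha.
set e := (`|be| + 1)^-1.
have n0 : 0 < `|be| + 1 by rewrite ltr_wpDl.
have e0 : 0 < e by rewrite invr_gt0.
have eb : e * be < 1.
  rewrite /e mulrC ltr_pdivrMr // mul1r.
  by apply: le_lt_trans (ler_norm be) _; rewrite ltrDl.
have a2 : 0 < al * al by rewrite -expr2 exprn_even_gt0.
have := H (e * al).
have -> : - (e * al) * al + e * al * (e * al) * be = (e * (al * al)) * (e * be - 1) by ring.
have p0 : 0 < e * (al * al) by rewrite mulr_gt0.
move: p0 eb; set P := e * (al * al); set Q := e * be; move=> p0 eb h; nra.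
Qed.

Definition A0 := [set p : V * V | Ls p.1 /\ forall w, Ls w -> dotp p.2 w = 2 * B p.1 w].

Lemma B0 w : Ls w -> B 0 w = 0.
Proof.
move=> Hw; have E : (0 : V) = (0 : R) *: (0 : V) by rewrite scale0r.
rewrite [X in B X _]E BZ; [ring | exact: Ls0 | exact: Hw].
Qed.

Lemma BB x y w : Ls x -> Ls y -> Ls w -> B (x - y) w = B x w - B y w.
Proof.
move=> Hx Hy Hw; have E : - y = (-1 : R) *: y by rewrite scaleN1r.
rewrite BD //; last exact: LsN.
by rewrite E BZ //; ring.
Qed.

Lemma A0ex x : Ls x -> exists y, A0 (x, y).
Proof.
move=> Hx.
have [r Hr] := @repr_lin _ _ _ Ls0 LsD LsZ (fun w => 2 * B x w)
   ltac:(by move=> u v Hu Hv /=; rewrite BDr // mulrDr)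
   ltac:(by move=> t v Hv /=; rewrite BZr // mulrCA).
by exists r; split.
Qed.

Lemma A0_lin : linrel A0.
Proof.
split.
- by split; [exact: Ls0 | move=> w Hw /=; rewrite dotp0l B0 // mulr0].
- move=> x x' y y' [Hx Hx'] [Hy Hy']; split; first exact: LsD.
  by move=> w Hw /=; rewrite dotpDl Hx' // Hy' // BD // mulrDr.
- move=> r x x' [Hx Hx']; split; first exact: LsZ.
  by move=> w Hw /=; rewrite dotpZl Hx' // BZ // mulrCA.
Qed.

Lemma A0_mono : monotone_rel A0.
Proof.
move=> x x' y y' [Hx Hx'] [Hy Hy'] /=.
have Hxy := LsB Hx Hy.
rewrite dotpC dotpBl Hx' // Hy' // -mulrBr -BB // Bvv //.
by apply: mulr_ge0 => //; exact: qpos.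
Qed.

Lemma A0_sym : symmetric_rel A0.
Proof.
move=> x x' y y' [Hx Hx'] [Hy Hy'] /=.
by rewrite dotpC Hy' // dotpC Hx' // Bsym.
Qed.

Lemma A0_max : max_monotone A0.
Proof.
split; first exact: A0_mono.
move=> Bs Hm Hsub; apply/seteqP; split; last exact: Hsub.
move=> [u w] Huw.
have Hu : Ls u.
  apply: (perp_perp Ls0 LsD LsZ) => z Hz.
  apply: (@lin_zero (dotp u w)) => t.
  have Hz0 : A0 (0, t *: z).
    by split; [exact: Ls0 | move=> w' Hw' /=; rewrite dotpZl Hz // B0 // !mulr0].
  have := Hm _ _ _ _ Huw (Hsub _ Hz0).
  by rewrite subr0 dotpBr dotpZr.
have [yu [_ Hyu]] := A0ex Hu.
split => // v Hv /=.
have [yv [_ Hyv]] := A0ex Hv.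
have Hd : forall t, A0 (u + t *: v, yu + t *: yv).
  move=> t; split; first by apply: LsD => //; apply: LsZ.
  move=> w' Hw' /=; rewrite dotpDl dotpZl Hyu // Hyv // BD //; last exact: LsZ.
  by rewrite BZ //; ring.
have H0 : dotp v (w - yu) = 0.
  apply: (@quad_zero _ (dotp v yv)) => t.
  have := Hm _ _ _ _ Huw (Hsub _ (Hd t)).
  have -> : u - (u + t *: v) = (- t) *: v by vec_eq.
  have -> : w - (yu + t *: yv) = (w - yu) + (- t) *: yv by vec_eq.
  rewrite dotpZl dotpDr dotpZr; lra.
rewrite dotpBr in H0.
rewrite dotpC -Hyu //= (dotpC yu); lra.
Qed.

Lemma A0_mm : mm_sym_linrel A0.
Proof. split; [exact: A0_lin | exact: A0_max | exact: A0_sym]. Qed.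

Lemma b0_ex : exists b0 : V, forall w, Ls w -> dotp b0 w = l w.
Proof. exact: (@repr_lin _ _ _ Ls0 LsD LsZ l lD lZ). Qed.

Lemma f_repr (b0 : V) : (forall w, Ls w -> dotp b0 w = l w) ->
  forall x, f x = quadf A0 a b0 (g 0 - dotp b0 a) x.
Proof.
move=> Hb x; rewrite /quadf.
have ex : a + (x - a) = x by rewrite addrC subrK.
case: (pselect (Ls (x - a))) => Hxa.
  have [y Hy] := A0ex Hxa.
  rewrite (qA_val A0_sym Hy) -EFinD -{1}ex Eg //; congr (_%:E).
  rewrite dotpC (proj2 Hy) //= Bvv //.
  have -> : dotp b0 x = dotp b0 (x - a) + dotp b0 a by rewrite -dotpDr subrK.
  rewrite Hb //.
  by rewrite /q /l; field.
rewrite qA_out; last by move=> [y [Hy _]].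
rewrite -{1}ex; move: Hxa; rewrite /Ls /=.
case: (f (a + (x - a))) => [r||] H //; exfalso; apply: H; by [rewrite ltry | rewrite ltNye].
Qed.

End Core.

Ltac vec_field := apply/rowP => ?; rewrite !mxE; field.

Section Final.
Context {R : realType} {n : nat}.
Local Notation V := 'rV[R]_n.

Lemma qA_even (A : set (V * V)) x : linrel A -> symmetric_rel A -> qA A (- x) = qA A x.
Proof.
move=> [_ _ HZ] Hs.
case: (pselect (exists y, A (x, y))) => [[y Hy]|Hn].
  have Hy' : A (- x, - y) by have := HZ (-1) _ _ Hy; rewrite !scaleN1r.
  by rewrite (qA_val Hs Hy) (qA_val Hs Hy') dotpNl dotpNr opprK.
rewrite !qA_out //; move=> [y Hy]; apply: Hn; exists (- y).
by have := HZ (-1) _ _ Hy; rewrite !scaleN1r opprK.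
Qed.

Lemma lim_even (fk : nat -> V -> \bar R) (f : V -> \bar R) :
  epiconverges fk f -> proper_fun f -> (forall k x, fk k (- x) = fk k x) ->
  forall x, f (- x) = f x.
Proof.
move=> He Hp Hev.
have H1 : forall x : V, (f (- x)%R <= f x)%E.
  move=> x; case E: (f x) => [r||]; [|by rewrite leey|by have := Hp.1 x; rewrite E].
  have [z [s [Hz [Hs Hev2]]]] := epi_recover He (x := x) (r := r) ltac:(by rewrite E).
  apply: (epi_upper He (z := fun k => - z k) (s := s)) => //.
  - by case: Hev2 => N _ HN; exists N => // k /= Hk; rewrite Hev; apply: HN.
  - exact: cvgN.
move=> x; apply: le_anti; rewrite H1 /=.
by have := H1 (- x); rewrite opprK.
Qed.

End Final.

Unset Implicit Arguments.

Theorem proposition5p7 (R : realType) (n : nat) :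
  (* (i) *)
  (forall (A : nat -> set ('rV[R]_n * 'rV[R]_n)) (a b : nat -> 'rV[R]_n)
          (c : nat -> R) (f : 'rV[R]_n -> \bar R),
      (forall k, mm_sym_linrel (A k)) ->
      epiconverges (fun k => quadf (A k) (a k) (b k) (c k)) f ->
      proper_fun f ->
      exists (A0 : set ('rV[R]_n * 'rV[R]_n)) (a0 b0 : 'rV[R]_n) (c0 : R),
        mm_sym_linrel A0 /\ f = quadf A0 a0 b0 c0)
  /\
  (* (ii) *)
  (forall (A : nat -> set ('rV[R]_n * 'rV[R]_n)) (c : nat -> R)
          (f : 'rV[R]_n -> \bar R),
      (forall k, mm_sym_linrel (A k)) ->
      epiconverges (fun k => fun x => (qA (A k) x + (c k)%:E)%E) f ->
      proper_fun f ->
      exists (A0 : set ('rV[R]_n * 'rV[R]_n)) (c0 : R),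
        mm_sym_linrel A0 /\ f = (fun x => (qA A0 x + c0%:E)%E)).
Proof.
split.
- move=> A a b c f HA He Hp.
  have HG : forall k, GQ (quadf (A k) (a k) (b k) (c k)).
    by move=> k; case: (HA k) => [Hl [Hm _] Hs]; exact: GQ_quadf.
  have HGf := lim_GQ He HG Hp.
  have [x0 Hx0] := Hp.2.
  have [b0 Hb] := b0_ex HGf Hx0.
  exists (A0 f x0), x0, b0, (g f x0 0 - dotp b0 x0); split; first exact: A0_mm.
  by apply: funext => x; exact: f_repr.
- move=> A c f HA He Hp.
  have Heq : (fun k x => (qA (A k) x + (c k)%:E)%E) = (fun k => quadf (A k) 0 0 (c k)).
    apply: funext => k; apply: funext => x.
    by rewrite /quadf subr0 dotp0l add0r.
  rewrite Heq in He.
  have HG : forall k, GQ (quadf (A k) 0 0 (c k)).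
    by move=> k; case: (HA k) => [Hl [Hm _] Hs]; exact: GQ_quadf.
  have HGf := lim_GQ He HG Hp.
  have Hev : forall x, f (- x) = f x.
    apply: (lim_even He Hp) => k x.
    case: (HA k) => [Hl _ Hs].
    by rewrite /quadf !subr0 qA_even // !dotp0l.
  have [x0 Hx0] := Hp.2.
  have H0 : (f (0%R : 'rV[R]_n) < +oo)%E.
    have Hx0' : (f (- x0)%R < +oo)%E by rewrite Hev.
    have [al [be [ga [_ Hl _ _]]]] := GQ_line HGf Hx0 Hx0'.
    have := Hl (2^-1); rewrite (_ : x0 + 2^-1 *: (- x0 - x0) = 0); last by vec_field.
    by move=> ->; rewrite ltry.
  have Hb : forall w, Ls f 0 w -> dotp 0 w = l f 0 w.
    move=> w _; rewrite dotp0l /l /g !add0r Hev; ring.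
  exists (A0 f 0), (g f 0 0 - dotp (0 : 'rV[R]_n) 0); split; first exact: A0_mm.
  apply: funext => x; rewrite (f_repr Hp HGf H0 Hb x) /quadf subr0 dotp0l add0r.
  by [].
Qed.
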